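(* Let $\mathbb{F}$ be a field, $\Gamma$ a finite abelian group written multiplicatively with unit $e$, and $M_1,M_2$ $\mathbb{F}$-representable matroids on a common ground set $E$ of the same rank $r$, with $A_k$ an $r\times E$ matrix over $\mathbb{F}$ representing $M_k$ ($k=1,2$). Let $\psi\colon E\to\Gamma$ be a labeling, let $D_\psi$ be the $E\times E$ diagonal matrix whose $(j,j)$ entry is $x_j\psi(j)$, where $\{x_j\}_{j\in E}$ are indeterminates, viewed as a matrix over the group ring $\mathbb{F}(\{x_j\}_{j\in E})[\Gamma]$, and let $\Xi:=A_1D_\psi A_2^\top$. Then for each $g\in\Gamma$, the coefficient of $g$ in $\det(\Xi)$ is a non-zero polynomial in $\{x_j\}_{j\in E}$ if and only if $M_1$ and $M_2$ have a common basis $B$ with $\prod_{j\in B}\psi(j)=g$.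
   Context: $A_k$ represents $M_k$ means the bases of $M_k$ are exactly the sets of columns forming a basis of the column space. The group ring $R[\Gamma]$ over a commutative ring $R$ is the set of formal sums $\sum_{g\in\Gamma}a_g g$ with $a_g\in R$, with the natural addition and multiplication $(\sum a_g g)(\sum b_h h)=\sum a_g b_h\,gh$; the coefficient of $g$ in $\det(\Xi)$ lies in $\mathbb{F}[\{x_j\}]$. *)

(* Defs.v *)
From HB Require Import structures.
From mathcomp Require Import all_boot all_order all_algebra all_fingroup.
From mathcomp Require Import mpoly.
Set Implicit Arguments. Unset Strict Implicit. Unset Printing Implicit Defensive.
Import GRing.Theory.

(* The group ring R[G] of a finite group G over a ring R:             *)
(* formal sums \sum_g a_g g, represented by the coefficient function  *)
(* g |-> a_g, with pointwise addition and convolution product         *)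
Section GroupRing.
Variables (R : pzRingType) (G : finGroupType).

Definition grpring := {ffun G -> R}.
HB.instance Definition _ := GRing.Zmodule.on grpring.

Local Open Scope ring_scope.

Definition gr_one : grpring := [ffun x => ((x == 1%g)%:R : R)].
Definition gr_mul (f h : grpring) : grpring :=
  [ffun x => \sum_(y : G) f y * h ((y^-1) * x)%g].

Lemma gr_mulA : associative gr_mul.
Proof.
move=> f h k; apply/ffunP=> x; rewrite /gr_mul !ffunE.
under [RHS]eq_bigr do rewrite ffunE big_distrl /=.
rewrite exchange_big /=.
apply: eq_bigr => y _; rewrite ffunE big_distrr /=.
rewrite [RHS](reindex (fun w => (y * w)%g)) /=; last first.
  by exists (fun z => (y^-1 * z)%g) => z _; rewrite ?mulKg ?mulKVg.
apply: eq_bigr => w _; rewrite mulKg mulrA invMg -mulgA.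
by [].
Qed.

Lemma gr_mul1 : left_id gr_one gr_mul.
Proof.
move=> f; apply/ffunP=> x; rewrite /gr_mul ffunE (bigD1 1%g) //= big1 ?addr0.
  by rewrite ffunE eqxx mul1r invg1 mul1g.
by move=> y /negbTE ny1; rewrite ffunE ny1 mul0r.
Qed.

Lemma gr_mulr1 : right_id gr_one gr_mul.
Proof.
move=> f; apply/ffunP=> x; rewrite /gr_mul ffunE (bigD1 x) //= big1 ?addr0.
  by rewrite ffunE mulVg eqxx mulr1.
move=> y nyx; rewrite ffunE.
have -> : ((y^-1 * x)%g == 1%g) = false.
  by apply/negbTE; rewrite -eq_mulVg1.
by rewrite mulr0.
Qed.

Lemma gr_mulDl : left_distributive gr_mul +%R.
Proof.
move=> f h k; apply/ffunP=> x; rewrite /gr_mul !ffunE -big_split /=.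
by apply: eq_bigr => y _; rewrite ffunE mulrDl.
Qed.

Lemma gr_mulDr : right_distributive gr_mul +%R.
Proof.
move=> f h k; apply/ffunP=> x; rewrite /gr_mul !ffunE -big_split /=.
by apply: eq_bigr => y _; rewrite ffunE mulrDr.
Qed.

HB.instance Definition _ :=
  GRing.Zmodule_isPzRing.Build grpring gr_mulA gr_mul1 gr_mulr1 gr_mulDl gr_mulDr.

Definition gr_elem (c : R) (g : G) : grpring := [ffun x => if x == g then c else 0].

Definition gr_coef (f : grpring) (g : G) : R := f g.

End GroupRing.

(* Matroid represented by an r x m matrix A over a field F, with       *)
(* ground set E = 'I_m: B is a basis iff the columns of A indexed by B *)
(* form a basis of the column space of A (linearly independent and     *)
(* spanning the column space).                                         *)
Section Matroid.
Local Open Scope ring_scope.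
Variables (F : fieldType) (r m : nat).

Definition cols_of (A : 'M[F]_(r, m)) (B : {set 'I_m}) : 'M[F]_(r, #|B|) :=
  colsub (fun i : 'I_#|B| => enum_val i) A.

Definition is_rep_basis (A : 'M[F]_(r, m)) (B : {set 'I_m}) : bool :=
  row_free (cols_of A B)^T && (A^T <= (cols_of A B)^T)%MS.

End Matroid.

Section Xi.
Local Open Scope ring_scope.
Variables (F : fieldType) (G : finGroupType) (r m : nat).

Definition lift_mx (A : 'M[F]_(r, m)) : 'M[grpring {mpoly F[m]} G]_(r, m) :=
  map_mx (fun c => gr_elem (c%:MP) 1%g) A.

Definition D_psi (psi : 'I_m -> G) : 'M[grpring {mpoly F[m]} G]_m :=
  diag_mx (\row_j gr_elem 'X_j (psi j)).

Definition Xi (A1 A2 : 'M[F]_(r, m)) (psi : 'I_m -> G) :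
    'M[grpring {mpoly F[m]} G]_r :=
  lift_mx A1 *m D_psi psi *m (lift_mx A2)^T.

End Xi.

(* Main.v *)
Require Import Defs.
From HB Require Import structures.
From mathcomp Require Import all_boot all_order all_algebra all_fingroup.
From mathcomp Require Import mpoly.
Import GRing.Theory.
Local Open Scope ring_scope.
Set Implicit Arguments. Unset Strict Implicit. Unset Printing Implicit Defensive.

Section GR.
Variables (R : pzRingType) (G : finGroupType).
Local Notation RG := (grpring R G).

Lemma gr_elemM (a b : R) (x y : G) :
  gr_elem a x * gr_elem b y = gr_elem (a * b) (x * y)%g :> RG.
Proof.
apply/ffunP=> z; rewrite /GRing.mul /= /gr_mul !ffunE.
rewrite (bigD1 x) //= big1 ?addr0; last by move=> w /negbTE nw; rewrite ffunE nw mul0r.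
rewrite !ffunE eqxx -(can_eq (mulKg x)).
by rewrite mulKVg; case: eqP => _; rewrite ?mulr0.
Qed.

Lemma gr_oneE : (1 : RG) = gr_elem 1 1%g.
Proof. by apply/ffunP=> z; rewrite !ffunE; case: eqP. Qed.

Lemma gr_elem_prod (I : Type) (s : seq I) (a : I -> R) (h : I -> G) :
  \prod_(i <- s) gr_elem (a i) (h i) = gr_elem (\prod_(i <- s) a i) (\prod_(i <- s) h i)%g :> RG.
Proof.
elim: s => [|i s IH]; first by rewrite !big_nil gr_oneE.
by rewrite !big_cons IH gr_elemM.
Qed.

Lemma gr_coef_sum (I : Type) (s : seq I) (P : pred I) (F : I -> RG) g :
  gr_coef (\sum_(i <- s | P i) F i) g = \sum_(i <- s | P i) gr_coef (F i) g.
Proof. by rewrite /gr_coef sum_ffunE. Qed.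

Lemma gr_coef_elem (a : R) x g : gr_coef (gr_elem a x : RG) g = if x == g then a else 0.
Proof. by rewrite /gr_coef ffunE eq_sym. Qed.

Lemma gr_coef_sign (b : bool) (f : RG) g : gr_coef ((-1) ^+ b * f) g = (-1) ^+ b * gr_coef f g.
Proof.
case: b; rewrite ?expr1 ?expr0 ?mul1r //.
by rewrite !mulN1r /gr_coef /GRing.opp /= !ffunE.
Qed.

Lemma gr_elemD (a b : R) x : gr_elem (a + b) x = gr_elem a x + gr_elem b x :> RG.
Proof. by apply/ffunP=> z; rewrite !ffunE; case: eqP; rewrite ?addr0. Qed.

Lemma gr_elem0 x : gr_elem 0 x = 0 :> RG.
Proof. by apply/ffunP=> z; rewrite !ffunE; case: eqP. Qed.
End GR.

Section XiComp.
Variables (F : fieldType) (G : finGroupType) (r m : nat).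
Variables (A1 A2 : 'M[F]_(r, m)) (psi : 'I_m -> G).
Local Notation P := {mpoly F[m]}.

Lemma XiE i k : Xi A1 A2 psi i k =
  \sum_j gr_elem ((A1 i j)%:MP * 'X_j * (A2 k j)%:MP) (psi j).
Proof.
rewrite /Xi /D_psi mul_mx_diag !mxE; apply: eq_bigr => j _.
by rewrite !mxE gr_elemM gr_elemM mul1g mulg1.
Qed.

Definition mon (f : 'I_r -> 'I_m) : 'X_{1..m} := (\sum_i U_(f i))%MM.

Lemma prodX (f : 'I_r -> 'I_m) : \prod_i ('X_(f i) : P) = 'X_[mon f].
Proof.
rewrite /mon; elim: (index_enum _) => [|i s IH]; first by rewrite !big_nil mpolyX0.
by rewrite !big_cons IH mpolyXD.
Qed.

Lemma coefXi g : gr_coef (\det (Xi A1 A2 psi)) g =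
  \sum_(f : {ffun 'I_r -> 'I_m} | (\prod_i psi (f i))%g == g)
     ((\prod_i A1 i (f i)) * \det (colsub f A2))%:MP * 'X_[mon f].
Proof.
rewrite [in LHS]/determinant gr_coef_sum.
under eq_bigr do rewrite gr_coef_sign.
under eq_bigr => s _.
  under eq_bigr do rewrite XiE.
  rewrite bigA_distr_bigA gr_coef_sum.
  under eq_bigr do rewrite gr_elem_prod gr_coef_elem.
  rewrite -big_mkcond /= big_distrr /=.
  over.
rewrite exchange_big /=; apply: eq_bigr => f _.
rewrite rmorphM /= rmorph_prod -det_tr -det_map_mx /determinant big_distrr big_distrl /=.
apply: eq_bigr => s _; rewrite mulrCA -mulrA; congr (_ * _).
rewrite -prodX -!big_split /=; apply: eq_bigr => i _.
by rewrite !mxE mulrAC.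
Qed.
End XiComp.

Section Mat.
Variables (F : fieldType) (r m : nat).

Lemma tr_colsub k (g : 'I_k -> 'I_m) (A : 'M[F]_(r, m)) : (colsub g A)^T = rowsub g A^T.
Proof. by apply/matrixP => i j; rewrite !mxE. Qed.

Lemma rowsub_le k (g : 'I_k -> 'I_m) k' (g' : 'I_k' -> 'I_m) (X : 'M[F]_(m, r)) :
  (forall i, exists j, g i = g' j) -> (rowsub g X <= rowsub g' X)%MS.
Proof.
move=> H; apply/row_subP => i; rewrite row_rowsub; have [j ->] := H i.
by rewrite -(row_rowsub g') row_sub.

Qed.

Lemma rowsub_leT k (g : 'I_k -> 'I_m) (X : 'M[F]_(m, r)) : (rowsub g X <= X)%MS.
Proof. by apply/row_subP => i; rewrite row_rowsub row_sub. Qed.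

Lemma basis_card (A : 'M[F]_(r, m)) B : \rank A = r -> is_rep_basis A B -> #|B| = r.
Proof.
move=> rk /andP [rf sub].
have e : \rank (cols_of A B)^T = #|B| by apply/eqP.
have s1 : ((cols_of A B)^T <= A^T)%MS by rewrite /cols_of tr_colsub rowsub_leT.
have h1 := mxrankS s1; have h2 := mxrankS sub.
rewrite (mxrank_tr A) rk e in h1; rewrite (mxrank_tr A) rk e in h2.
by apply/eqP; rewrite eqn_leq h1 h2.
Qed.

Lemma basis_det (A : 'M[F]_(r, m)) (f : 'I_r -> 'I_m) : \rank A = r -> injective f ->
  is_rep_basis A (f @: [set: 'I_r]) = (\det (colsub f A) != 0).
Proof.
move=> rk finj; set B := f @: _.
have cB : #|B| = r by rewrite card_imset // cardsT card_ord.
have eqM : ((cols_of A B)^T == (colsub f A)^T)%MS.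
  apply/andP; split; rewrite /cols_of !tr_colsub; apply: rowsub_le => i.
    have : enum_val i \in B by apply: enum_valP.
    by case/imsetP => j _ ->; exists j.
  have Hi : f i \in B by apply: imset_f.
  by exists (enum_rank_in Hi (f i)); rewrite enum_rankK_in.
have rkeq := eqmx_rank eqM; rewrite (mxrank_tr (colsub f A)) in rkeq.
have -> : (\det (colsub f A) != 0) = (\rank (colsub f A) == r).
  by rewrite -unitfE -unitmxE -row_free_unit.
rewrite /is_rep_basis /row_free rkeq.
have -> : (\rank (colsub f A) == #|B|) = (\rank (colsub f A) == r) by rewrite cB.
case: eqP => //= hr.
have sub : ((cols_of A B)^T <= A^T)%MS by rewrite /cols_of tr_colsub rowsub_leT.
rewrite -(mxrank_leqif_sup sub).2 rkeq hr (mxrank_tr A) rk.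
by rewrite eqxx.
Qed.
End Mat.

Section Comb.
Variables (F : fieldType) (G : finGroupType) (HG : abelian [set: G]) (r m : nat).
Variables (A1 A2 : 'M[F]_(r, m)) (psi : 'I_m -> G).

Lemma mulgC' : commutative (@mulg G).
Proof. move=> x y. have := centsP HG x (in_setT _) y (in_setT _). by []. Qed.
HB.instance Definition _ := SemiGroup.isCommutativeLaw.Build G mulg mulgC'.

Definition cc (f : 'I_r -> 'I_m) : F := (\prod_i A1 i (f i)) * \det (colsub f A2).

Lemma det_inj (A : 'M[F]_(r, m)) (f : 'I_r -> 'I_m) : \det (colsub f A) != 0 -> injective f.
Proof.
move=> H; apply/injectiveP; apply: contraR H => /injectivePn [i1 [i2 hne heq]].
by rewrite -det_tr (determinant_alternate hne) // => k; rewrite !mxE heq.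
Qed.

Lemma cc_inj f : cc f != 0 -> injective f.
Proof. by rewrite /cc mulf_eq0 negb_or => /andP [_ /det_inj]. Qed.

Lemma monE (f : 'I_r -> 'I_m) j : mon f j = (\sum_i (f i == j))%N.
Proof. by rewrite /mon mnm_sumE; apply: eq_bigr => i _; rewrite mnm1E. Qed.

Lemma L (f0 f : 'I_r -> 'I_m) : injective f0 -> injective f -> mon f = mon f0 ->
  exists s : 'S_r, forall i, f i = f0 (s i).
Proof.
move=> f0inj finj hm.
have ex i : exists k, f0 k = f i.
  have : (0 < mon f (f i))%N by rewrite monE (bigD1 i) //= eqxx.
  rewrite hm monE; case: (pickP (fun k => f0 k == f i)) => [k /eqP hk | none].
    by move=> _; exists k.
  by rewrite big1 // => k _; rewrite none.
have [s' hs'] := fin_all_exists ex.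
have s'inj : injective s'.
  by move=> i j hij; apply: finj; rewrite -hs' -(hs' j) hij.
by exists (perm s'inj) => i; rewrite permE hs'.
Qed.

Lemma mon_perm (f0 : 'I_r -> 'I_m) (s : 'S_r) : mon [ffun i => f0 (s i)] = mon f0.
Proof.
rewrite /mon [RHS](reindex_perm s); apply: eq_bigr => i _; by rewrite ffunE.
Qed.

Lemma psi_perm (f0 : 'I_r -> 'I_m) (s : 'S_r) :
  (\prod_i psi (f0 (s i)) = \prod_i psi (f0 i))%g.
Proof. by rewrite [RHS](reindex_perm s). Qed.

Lemma K (f0 : 'I_r -> 'I_m) : injective f0 ->
  \sum_(f : {ffun 'I_r -> 'I_m} | mon f == mon f0) cc f
    = \det (colsub f0 A1) * \det (colsub f0 A2).
Proof.
move=> f0inj.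
rewrite (bigID (fun f : {ffun 'I_r -> 'I_m} => injectiveb f)) /= [X in _ + X]big1 ?addr0; last first.
  move=> f /andP [_ ninj]; apply/eqP; apply: contraNT ninj => /cc_inj/injectiveP //.
pose phi := fun s : 'S_r => [ffun i => f0 (s i)].
transitivity (\sum_(f in phi @: [set: 'S_r]) cc f).
  apply: eq_bigl => f; apply/idP/idP.
    case/andP => /eqP hm /injectiveP hf; have [s hs] := L f0inj hf hm.
    by apply/imsetP; exists s => //; apply/ffunP => i; rewrite ffunE hs.
  case/imsetP => s _ ->; apply/andP; split; first by rewrite mon_perm.
  by apply/injectiveP => i j; rewrite !ffunE => /f0inj /perm_inj.
rewrite big_imset /=; last first.
  move=> s1 s2 _ _ h; apply/permP => i.
  by have := congr1 (fun f : {ffun 'I_r -> 'I_m} => f i) h; rewrite !ffunE => /f0inj.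
under eq_bigl do rewrite in_setT.
rewrite [\det (colsub f0 A1)]/determinant big_distrl /=; apply: eq_bigr => s _.
rewrite /cc.
have -> : colsub (phi s) A2 = col_perm s (colsub f0 A2).
  by apply/matrixP => i j; rewrite !mxE ffunE.
rewrite col_permE det_mulmx det_perm odd_permV.
have -> : \prod_i A1 i (phi s i) = \prod_i colsub f0 A1 i (s i).
  by apply: eq_bigr => i _; rewrite !mxE ffunE.
by rewrite [_ * (-1) ^+ _]mulrC mulrCA mulrA.
Qed.

Lemma Q (f0 : 'I_r -> 'I_m) g : injective f0 -> (\prod_i psi (f0 i))%g = g ->
  \sum_(f : {ffun 'I_r -> 'I_m} | ((\prod_i psi (f i))%g == g) && (mon f == mon f0)) cc f
    = \det (colsub f0 A1) * \det (colsub f0 A2).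
Proof.
move=> f0inj hg; rewrite -(K f0inj) [RHS]big_mkcond [LHS]big_mkcond.
apply: eq_bigr => f _.
case: (boolP (mon f == mon f0)) => hm; rewrite ?andbF ?andbT //.
case: eqP => // hne.
case: (boolP (cc f == 0)) => [/eqP -> // | /cc_inj finj].
have [s hs] := L f0inj finj (eqP hm).
by exfalso; apply: hne; rewrite -hg -(psi_perm f0 s); apply: eq_bigr => i _; rewrite hs.
Qed.
Lemma psi_imset (f : 'I_r -> 'I_m) : injective f ->
  (\prod_(j in f @: [set: 'I_r]) psi j = \prod_i psi (f i))%g.
Proof.
move=> finj; rewrite big_imset /=; last by move=> x y _ _; apply: finj.
by apply: eq_bigl => i; rewrite in_setT.
Qed.
End Comb.

Unset Implicit Arguments.

Theorem lemma4p2 (F : fieldType) (G : finGroupType)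
    (HG : abelian [set: G]) (r m : nat) (A1 A2 : 'M[F]_(r, m))
    (rkA1 : \rank A1 = r) (rkA2 : \rank A2 = r)
    (psi : 'I_m -> G) (g : G) :
  gr_coef (\det (Xi A1 A2 psi)) g != 0 <->
  exists B : {set 'I_m},
    [/\ is_rep_basis A1 B, is_rep_basis A2 B & (\prod_(j in B) psi j)%g = g].
Proof.
rewrite coefXi.
set p := \sum_(f | _) _.
have coefp mm : p@_mm = \sum_(f : {ffun 'I_r -> 'I_m} | ((\prod_i psi (f i))%g == g) && (mon f == mm)) cc A1 A2 f.
  rewrite /p raddf_sum big_mkcondr /=; apply: eq_bigr => f _.
  by rewrite mcoeffCM mcoeffX; case: eqP; rewrite ?mulr1 ?mulr0.
split.
  move=> hp.
  have [mm hmm] : exists mm, p@_mm != 0.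
    move: hp; rewrite -msupp_eq0; case E: (msupp p) => [|mm s] // _.
    by exists mm; rewrite -mcoeff_msupp E mem_head.
  rewrite coefp in hmm.
  case: (pickP (fun f : {ffun 'I_r -> 'I_m} => [&& ((\prod_i psi (f i))%g == g), mon f == mm & cc A1 A2 f != 0])) => [f | none]; last first.
    rewrite big1 ?eqxx // in hmm => f /andP [ha hb]; have := none f; rewrite ha hb /=.
    by move/negbFE/eqP.
  case/and3P => hf /eqP hmf hcf.
  have finj := cc_inj hcf.
  rewrite -hmf (Q HG A1 A2 finj (eqP hf)) mulf_eq0 negb_or in hmm.
  case/andP: hmm => h1 h2.
  exists (f @: [set: 'I_r]); split.
  - by rewrite basis_det.
  - by rewrite basis_det.
  - by rewrite (psi_imset HG psi finj); apply/eqP.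
case=> B [b1 b2 hB].
have cB := basis_card rkA1 b1.
pose f0 := fun i : 'I_r => enum_val (cast_ord (esym cB) i) : 'I_m.
have f0inj : injective f0 by move=> i j /enum_val_inj /cast_ord_inj.
have hB0 : f0 @: [set: 'I_r] = B.
  apply/setP => j; apply/imsetP/idP => [[i _ ->] | Hj]; first exact: enum_valP.
  exists (cast_ord cB (enum_rank_in Hj j)) => //.
  by rewrite /f0 cast_ordK enum_rankK_in.
rewrite -hB0 in b1 b2 hB.
rewrite basis_det // in b1; rewrite basis_det // in b2.
rewrite (psi_imset HG psi f0inj) in hB.
apply/eqP => p0; have := coefp (mon f0).
rewrite p0 mcoeff0 (Q HG A1 A2 f0inj hB) => /esym/eqP.
by rewrite mulf_eq0 (negbTE b1) (negbTE b2).
Qed.
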